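(* Let $n\ge0$ and $k\ge1$. For every formula $\alpha$: if $\vDash_{\mathcal{R}_n^k}\alpha$ then $\vdash_{L_n^k}\alpha$.
   Context: Formulas are built from a countable set of propositional variables using unary $\neg,\circ$ and binary $\land,\lor,\to$; $\circ^0\alpha=\alpha$, $\circ^{m+1}\alpha=\circ(\circ^m\alpha)$, $\alpha\leftrightarrow\beta:=(\alpha\to\beta)\land(\beta\to\alpha)$. mbC is the Hilbert calculus with the axiom schemas of a standard axiomatization of positive classical propositional logic in $\land,\lor,\to$, plus (TND) $\alpha\lor\neg\alpha$ and (bc1) $\circ\alpha\to(\alpha\to(\neg\alpha\to\beta))$, modus ponens being the only rule; mbCciw is mbC plus (ciw) $\circ\alpha\lor(\alpha\land\neg\alpha)$. For $n\ge0$, $k\ge1$, $L_n^k$ is mbCciw plus (cc$^n$) $\circ^{n+2}\alpha$, (dn) $\neg\neg\alpha\leftrightarrow\alpha$, and (ip$^j$) $\neg\circ^j\neg\alpha\leftrightarrow\neg\circ^j\alpha$ for each $1\le j<k$. $\mathcal{M}_1$ is the three-valued Nmatrix with values $T,t,F$, designated set $D=\{T,t\}$, and: $\neg T=\{F\}$, $\neg t=\{t\}$, $\neg F=\{T\}$; $\circ T=\circ F=\{T,t\}$, $\circ t=\{F\}$; $x\land y=\{T,t\}$ if $x,y\in D$ else $\{F\}$; $x\lor y=\{T,t\}$ if $x\in D$ or $y\in D$ else $\{F\}$; $x\to y=\{T,t\}$ if $x\notin D$ or $y\in D$ else $\{F\}$. A valuation over $\mathcal{M}_1$ is a map $\vartheta$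 from formulas to $\{T,t,F\}$ respecting these multioperations. $\mathcal{F}_n^k$ is the set of valuations $\vartheta$ over $\mathcal{M}_1$ such that for every formula $\alpha$: (vCc$^n$) if $\vartheta(\circ^n\alpha)\in\{T,F\}$ then $\vartheta(\circ^{n+1}\alpha)=T$; and (vip$^j$) $\vartheta(\circ^j\alpha)=\vartheta(\circ^j\neg\alpha)$ for each $1\le j\le k-1$. $\mathcal{R}_n^k=\langle\mathcal{M}_1,\mathcal{F}_n^k\rangle$, and $\vDash_{\mathcal{R}_n^k}\alpha$ means $\vartheta(\alpha)\in D$ for all $\vartheta\in\mathcal{F}_n^k$. *)

(* Defs.v *)
From Stdlib Require Import Arith.

Inductive formula : Type :=
| Var  : nat -> formula
| Neg  : formula -> formula
| Circ : formula -> formula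
| And  : formula -> formula -> formula
| Or   : formula -> formula -> formula
| Imp  : formula -> formula -> formula.

Fixpoint circn (m : nat) (a : formula) : formula :=
  match m with
  | 0 => a
  | S m' => Circ (circn m' a)
  end.

Definition Iff (a b : formula) : formula := And (Imp a b) (Imp b a).

(* Axiom schemas of mbC: a standard axiomatization of positive classical
   propositional logic (Ax1-Ax9, as in Carnielli-Coniglio) plus (TND) and (bc1). *)
Inductive mbC_axiom : formula -> Prop :=
| Ax1 a b : mbC_axiom (Imp a (Imp b a))
| Ax2 a b c : mbC_axiom (Imp (Imp a b) (Imp (Imp a (Imp b c)) (Imp a c)))
| Ax3 a b : mbC_axiom (Imp a (Imp b (And a b)))
| Ax4 a b : mbC_axiom (Imp (And a b) a)
| Ax5 a b : mbC_axiom (Imp (And a b) b)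
| Ax6 a b : mbC_axiom (Imp a (Or a b))
| Ax7 a b : mbC_axiom (Imp b (Or a b))
| Ax8 a b c : mbC_axiom (Imp (Imp a c) (Imp (Imp b c) (Imp (Or a b) c)))
| Ax9 a b : mbC_axiom (Or a (Imp a b))
| AxTND a : mbC_axiom (Or a (Neg a))
| Axbc1 a b : mbC_axiom (Imp (Circ a) (Imp a (Imp (Neg a) b))).

Inductive Lnk_axiom (n k : nat) : formula -> Prop :=
| Ax_mbC a : mbC_axiom a -> Lnk_axiom n k a
| Ax_ciw a : Lnk_axiom n k (Or (Circ a) (And a (Neg a)))
| Ax_cc a : Lnk_axiom n k (circn (n + 2) a)
| Ax_dn a : Lnk_axiom n k (Iff (Neg (Neg a)) a)
| Ax_ip j a : 1 <= j -> j < k ->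
    Lnk_axiom n k (Iff (Neg (circn j (Neg a))) (Neg (circn j a))).

Inductive Lnk_provable (n k : nat) : formula -> Prop :=
| Pr_ax a : Lnk_axiom n k a -> Lnk_provable n k a
| Pr_mp a b : Lnk_provable n k a -> Lnk_provable n k (Imp a b) ->
    Lnk_provable n k b.

Inductive val3 : Type := VT | Vt | VF.

Definition designated (x : val3) : Prop := x = VT \/ x = Vt.

(* Multioperations of M_1, as membership predicates: op x y z <-> z ∈ x op y *)
Definition neg_m (x z : val3) : Prop :=
  match x with
  | VT => z = VF
  | Vt => z = Vt
  | VF => z = VT
  end.

Definition circ_m (x z : val3) : Prop :=
  match x with
  | Vt => z = VF
  | _ => designated z
  end.

Definition and_m (x y z : val3) : Prop :=
  (designated x /\ designated y -> designated z) /\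
  (~ (designated x /\ designated y) -> z = VF).

Definition or_m (x y z : val3) : Prop :=
  (designated x \/ designated y -> designated z) /\
  (~ (designated x \/ designated y) -> z = VF).

Definition imp_m (x y z : val3) : Prop :=
  (~ designated x \/ designated y -> designated z) /\
  (~ (~ designated x \/ designated y) -> z = VF).

Definition valuation (v : formula -> val3) : Prop :=
  forall a b : formula,
    neg_m (v a) (v (Neg a)) /\
    circ_m (v a) (v (Circ a)) /\
    and_m (v a) (v b) (v (And a b)) /\
    or_m (v a) (v b) (v (Or a b)) /\
    imp_m (v a) (v b) (v (Imp a b)).

Definition in_Fnk (n k : nat) (v : formula -> val3) : Prop :=
  valuation v /\
  (forall a : formula,
     (v (circn n a) = VT \/ v (circn n a) = VF) -> v (circn (S n) a) = VT) /\
  (forall (j : nat) (a : formula), 1 <= j -> j <= k - 1 ->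
     v (circn j a) = v (circn j (Neg a))).

Definition Rnk_valid (n k : nat) (a : formula) : Prop :=
  forall v, in_Fnk n k v -> designated (v a).

(* Main.v *)
Require Import Defs.
From Stdlib Require Import Arith Lia Classical ClassicalEpsilon Cantor.

Fixpoint code (f : formula) : nat :=
  match f with
  | Var m => Cantor.to_nat (0, m)
  | Neg a => Cantor.to_nat (1, code a)
  | Circ a => Cantor.to_nat (2, code a)
  | And a b => Cantor.to_nat (3, Cantor.to_nat (code a, code b))
  | Or a b => Cantor.to_nat (4, Cantor.to_nat (code a, code b))
  | Imp a b => Cantor.to_nat (5, Cantor.to_nat (code a, code b))
  end.

Lemma to_nat_inj p q : Cantor.to_nat p = Cantor.to_nat q -> p = q.
Proof. intro H. rewrite <- (cancel_of_to p), <- (cancel_of_to q), H. reflexivity. Qed.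

Lemma code_inj : forall a b, code a = code b -> a = b.
Proof.
  induction a; destruct b; cbn [code]; intro H; apply to_nat_inj in H;
    try discriminate; apply (f_equal snd) in H; cbn [snd] in H.
  - subst; reflexivity.
  - f_equal; auto.
  - f_equal; auto.
  - apply to_nat_inj in H; inversion H; f_equal; auto.
  - apply to_nat_inj in H; inversion H; f_equal; auto.
  - apply to_nat_inj in H; inversion H; f_equal; auto.
Qed.

Inductive Der (n k : nat) (G : formula -> Prop) : formula -> Prop :=
| D_hyp a : G a -> Der n k G a
| D_ax a : Lnk_axiom n k a -> Der n k G a
| D_mp a b : Der n k G a -> Der n k G (Imp a b) -> Der n k G b.

Definition ext (G : formula -> Prop) (a : formula) := fun x => G x \/ x = a.

Lemma Der_mono n k (G H : formula -> Prop) a :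
  (forall x, G x -> H x) -> Der n k G a -> Der n k H a.
Proof. intros HGH D; induction D as [x Hx|x Hx|x y D1 IH1 D2 IH2]; [apply D_hyp; apply HGH; exact Hx | apply D_ax; exact Hx | exact (D_mp n k H x y IH1 IH2)]. Qed.

Lemma Der_prov n k a : Der n k (fun _ => False) a -> Lnk_provable n k a.
Proof. intro D; induction D as [x Hx|x Hx|x y D1 IH1 D2 IH2]. - destruct Hx. - apply Pr_ax; exact Hx. - exact (Pr_mp n k x y IH1 IH2). Qed.

Lemma ax1 n k G a b : Der n k G (Imp a (Imp b a)).
Proof. apply D_ax, Ax_mbC, Ax1. Qed.

Lemma imp_refl n k G a : Der n k G (Imp a a).
Proof.
  eapply D_mp; [apply (ax1 n k G a (Imp a a))|].
  eapply D_mp; [apply (ax1 n k G a a)|].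
  apply D_ax, Ax_mbC, Ax2.
Qed.

Lemma deduction n k G a b : Der n k (ext G a) b -> Der n k G (Imp a b).
Proof.
  intro D; induction D as [x Hx|x Hx|x y D1 IH1 D2 IH2].
  - destruct Hx as [Hx|Hx].
    + eapply D_mp; [apply D_hyp; exact Hx| apply ax1].
    + subst; apply imp_refl.
  - eapply D_mp; [apply D_ax; exact Hx| apply ax1].
  - eapply D_mp; [exact IH2|]. eapply D_mp; [exact IH1|]. apply D_ax, Ax_mbC, Ax2.
Qed.

Lemma cut n k G a b : Der n k G a -> Der n k (ext G a) b -> Der n k G b.
Proof. intros Da Db. eapply D_mp; [exact Da| apply deduction; exact Db]. Qed.

Fixpoint stage n k (phi : formula) (m : nat) : formula -> Prop :=
  match m with
  | 0 => fun _ => False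
  | S m => fun x => stage n k phi m x \/
                    (code x = m /\ ~ Der n k (ext (stage n k phi m) x) phi)
  end.

Lemma stage_mono n k phi m m' x : m <= m' -> stage n k phi m x -> stage n k phi m' x.
Proof.
  induction 1 as [|m0 Hle IH]; auto. intro Hs. simpl. left. auto.
Qed.

Lemma stage_cons n k phi m : ~ Der n k (fun _ => False) phi -> ~ Der n k (stage n k phi m) phi.
Proof.
  intro H0. induction m as [|m IH]; [exact H0|].
  destruct (classic (exists y, code y = m /\ ~ Der n k (ext (stage n k phi m) y) phi))
    as [[y [Hy Hn]]|Hno].
  - intro D. apply Hn. eapply Der_mono; [|exact D].
    intros x [Hx|[Hx _]]; [left; auto|right]. apply code_inj; congruence.
  - intro D. apply IH. eapply Der_mono; [|exact D].
    intros x [Hx|[Hx Hn]]; auto. exfalso; apply Hno; exists x; auto.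
Qed.

Definition Delta n k phi : formula -> Prop := fun x => exists m, stage n k phi m x.

Lemma compact n k phi a : Der n k (Delta n k phi) a -> exists m, Der n k (stage n k phi m) a.
Proof.
  intro D; induction D as [x [m Hx]|x Hx|x y D1 [m1 IH1] D2 [m2 IH2]].
  - exists m; apply D_hyp; auto.
  - exists 0; apply D_ax; auto.
  - exists (max m1 m2). eapply D_mp.
    + eapply Der_mono; [|exact IH1]. intros; eapply stage_mono; [|eauto]; lia.
    + eapply Der_mono; [|exact IH2]. intros; eapply stage_mono; [|eauto]; lia.
Qed.

Definition sat n k phi (D : formula -> Prop) :=
  (forall x, Der n k D x -> D x) /\ ~ D phi /\
  (forall x, D x \/ Der n k (ext D x) phi).

Lemma Delta_sat n k phi : ~ Der n k (fun _ => False) phi -> sat n k phi (Delta n k phi).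
Proof.
  intro H0.
  assert (Hc : ~ Der n k (Delta n k phi) phi).
  { intro D. destruct (compact _ _ _ _ D) as [m Dm]. exact (stage_cons n k phi m H0 Dm). }
  assert (Hm : forall x, Delta n k phi x \/ Der n k (ext (Delta n k phi) x) phi).
  { intro x. destruct (classic (Der n k (ext (Delta n k phi) x) phi)) as [H|H]; [right; auto|left].
    exists (S (code x)). simpl. right. split; auto. intro D; apply H.
    eapply Der_mono; [|exact D]. intros y [Hy|Hy]; [left; exists (code x); auto|right; auto]. }
  split; [|split; [intro; apply Hc; apply D_hyp; auto|exact Hm]].
  intros x Dx. destruct (Hm x) as [H|H]; auto. exfalso; apply Hc. eapply cut; eauto.
Qed.


Lemma S_ax n k phi D x : sat n k phi D -> Lnk_axiom n k x -> D x.
Proof. intros [Hc _] H. apply Hc, D_ax, H. Qed.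

Lemma S_mp n k phi D a b : sat n k phi D -> D a -> D (Imp a b) -> D b.
Proof. intros [Hc _] Ha Hb. apply Hc. apply (D_mp n k D a b); apply D_hyp; assumption. Qed.

Lemma S_or n k phi D a b : sat n k phi D -> D (Or a b) -> D a \/ D b.
Proof.
  intros S H. destruct (classic (D a)) as [Ha|Ha]; auto.
  destruct (classic (D b)) as [Hb|Hb]; auto. exfalso.
  destruct S as [Hc [Hp Hm]]. apply Hp, Hc.
  destruct (Hm a) as [?|Da]; [contradiction|].
  destruct (Hm b) as [?|Db]; [contradiction|].
  apply deduction in Da. apply deduction in Db.
  eapply D_mp; [apply D_hyp; exact H|].
  eapply D_mp; [exact Db|]. eapply D_mp; [exact Da|]. apply D_ax, Ax_mbC, Ax8.
Qed.

Lemma S_orI n k phi D a b : sat n k phi D -> D a \/ D b -> D (Or a b).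
Proof.
  intros S [H|H]; eapply S_mp; eauto; apply (S_ax n k phi); auto; apply Ax_mbC; constructor.
Qed.

Lemma S_and n k phi D a b : sat n k phi D -> (D (And a b) <-> D a /\ D b).
Proof.
  intros S; split.
  - intro H; split; eapply S_mp; eauto; apply (S_ax n k phi); auto; apply Ax_mbC; constructor.
  - intros [Ha Hb]. eapply S_mp; [eauto|exact Hb|]. eapply S_mp; [eauto|exact Ha|].
    apply (S_ax n k phi); auto; apply Ax_mbC; constructor.
Qed.

Lemma S_imp n k phi D a b : sat n k phi D -> (D (Imp a b) <-> ~ D a \/ D b).
Proof.
  intros S; split.
  - intro H. destruct (classic (D a)); [right; eapply S_mp; eauto|left; auto].
  - intros [Ha|Hb].
    + assert (H : D (Or a (Imp a b))) by (apply (S_ax n k phi); auto; apply Ax_mbC; constructor).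
      destruct (S_or _ _ _ _ _ _ S H); [contradiction|auto].
    + eapply S_mp; [eauto|exact Hb|]. apply (S_ax n k phi); auto; apply Ax_mbC; constructor.
Qed.

Lemma S_tnd n k phi D a : sat n k phi D -> D a \/ D (Neg a).
Proof. intro S. apply (S_or n k phi); auto. apply (S_ax n k phi); auto; apply Ax_mbC; constructor. Qed.

Lemma S_bc n k phi D a : sat n k phi D -> D (Circ a) -> D a -> D (Neg a) -> False.
Proof.
  intros S H1 H2 H3. pose proof S as [_ [Hp _]]. apply Hp.
  eapply S_mp; [eauto|exact H3|]. eapply S_mp; [eauto|exact H2|]. eapply S_mp; [eauto|exact H1|].
  apply (S_ax n k phi); auto; apply Ax_mbC; constructor.
Qed.

Lemma S_iff n k phi D a b : sat n k phi D -> D (Iff a b) -> (D a <-> D b).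
Proof.
  intros S H. unfold Iff in H. apply (S_and n k phi) in H; auto. destruct H as [H1 H2].
  split; intro; eapply S_mp; eauto.
Qed.

Lemma S_ciw n k phi D a : sat n k phi D -> D (Circ a) \/ (D a /\ D (Neg a)).
Proof.
  intro S. assert (H : D (Or (Circ a) (And a (Neg a)))) by (apply (S_ax n k phi); auto; apply Ax_ciw).
  destruct (S_or _ _ _ _ _ _ S H) as [H'|H']; auto. right. apply (S_and n k phi); auto.
Qed.

Definition vD (D : formula -> Prop) (x : formula) : val3 :=
  if excluded_middle_informative (D x) then
    if excluded_middle_informative (D (Neg x)) then Vt else VT
  else VF.

Lemma vD_T D x : D x -> ~ D (Neg x) -> vD D x = VT.
Proof. intros. unfold vD. destruct (excluded_middle_informative (D x)); [|contradiction].
  destruct (excluded_middle_informative (D (Neg x))); [contradiction|auto]. Qed.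
Lemma vD_t D x : D x -> D (Neg x) -> vD D x = Vt.
Proof. intros. unfold vD. destruct (excluded_middle_informative (D x)); [|contradiction].
  destruct (excluded_middle_informative (D (Neg x))); [auto|contradiction]. Qed.
Lemma vD_F D x : ~ D x -> vD D x = VF.
Proof. intros. unfold vD. destruct (excluded_middle_informative (D x)); [contradiction|auto]. Qed.

Lemma vD_cases D x :
  (vD D x = VT /\ D x /\ ~ D (Neg x)) \/ (vD D x = Vt /\ D x /\ D (Neg x)) \/
  (vD D x = VF /\ ~ D x).
Proof.
  destruct (classic (D x)); [destruct (classic (D (Neg x)))|].
  - right; left; auto using vD_t.
  - left; auto using vD_T.
  - right; right; auto using vD_F.
Qed.

Lemma vD_des D x : designated (vD D x) <-> D x.
Proof.
  unfold designated. destruct (vD_cases D x) as [[E [? ?]]|[[E [? ?]]|[E ?]]]; rewrite E;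
    split; intuition discriminate.
Qed.

Lemma vD_not_t D x : vD D x <> Vt <-> ~ (D x /\ D (Neg x)).
Proof.
  destruct (vD_cases D x) as [[E [? ?]]|[[E [? ?]]|[E ?]]]; rewrite E; split; intuition discriminate.
Qed.

Lemma vD_circ n k phi D x : sat n k phi D -> (D (Circ x) <-> vD D x <> Vt).
Proof.
  intros S. rewrite vD_not_t. split.
  - intros H [H1 H2]. eapply S_bc; eauto.
  - intro H. destruct (S_ciw n k phi D x S); tauto.
Qed.

Lemma vD_valuation n k phi D : sat n k phi D -> valuation (vD D).
Proof.
  intros S a b. split; [|split; [|split; [|split]]].
  - destruct (vD_cases D a) as [[E [H1 H2]]|[[E [H1 H2]]|[E H1]]]; rewrite E; simpl.
    + apply vD_F; auto.
    + apply vD_t; auto. apply (S_iff n k phi D (Neg (Neg a)) a S); auto.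
      apply (S_ax n k phi); auto; apply Ax_dn.
    + destruct (S_tnd n k phi D a S); [contradiction|]. apply vD_T; auto.
      intro Hx. apply H1. apply (S_iff n k phi D (Neg (Neg a)) a S); auto.
      apply (S_ax n k phi); auto; apply Ax_dn.
  - pose proof (vD_circ n k phi D a S) as Hc.
    destruct (vD_cases D a) as [[E [H1 H2]]|[[E [H1 H2]]|[E H1]]]; rewrite E in *; simpl.
    + apply vD_des, Hc; discriminate.
    + apply vD_F. rewrite Hc. auto.
    + apply vD_des, Hc; discriminate.
  - unfold and_m. rewrite !vD_des. rewrite (S_and n k phi D a b S). split; auto.
    intro; apply vD_F; rewrite (S_and n k phi D a b S); auto.
  - unfold or_m. rewrite !vD_des. split.
    + intro; apply (S_orI n k phi); auto.
    + intros H; apply vD_F; intro H'; apply H; eapply S_or; eauto.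
  - unfold imp_m. rewrite !vD_des. rewrite (S_imp n k phi D a b S). split; auto.
    intro; apply vD_F; rewrite (S_imp n k phi D a b S); auto.
Qed.

Lemma vD_ip n k phi D : sat n k phi D -> forall j a, 1 <= j -> j < k ->
  vD D (circn j a) = vD D (circn j (Neg a)).
Proof.
  intros HS j a. induction j as [|j IH]; intros H1 H2; [lia|].
  assert (Hlow : vD D (circn j a) <> Vt <-> vD D (circn j (Neg a)) <> Vt).
  { destruct j as [|j].
    - simpl. destruct (vD_cases D a) as [[E [? ?]]|[[E [? ?]]|[E ?]]]; rewrite E.
      + rewrite (vD_F D (Neg a)); [split; discriminate|auto].
      + rewrite (vD_t D (Neg a)); [split; auto| auto|].
        apply (S_iff n k phi D (Neg (Neg a)) a HS); auto. apply (S_ax n k phi); auto; apply Ax_dn.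
      + destruct (S_tnd n k phi D a HS); [contradiction|].
        rewrite (vD_T D (Neg a)); [split; discriminate|auto|].
        intro Hx. apply H. apply (S_iff n k phi D (Neg (Neg a)) a HS); auto.
        apply (S_ax n k phi); auto; apply Ax_dn.
    - rewrite IH by lia. tauto. }
  assert (E1 : D (circn (S j) a) <-> D (circn (S j) (Neg a))).
  { simpl. rewrite !(vD_circ n k phi D _ HS). exact Hlow. }
  assert (E2 : D (Neg (circn (S j) a)) <-> D (Neg (circn (S j) (Neg a)))).
  { symmetry. apply (S_iff n k phi D _ _ HS). apply (S_ax n k phi); auto. apply Ax_ip; lia. }
  destruct (vD_cases D (circn (S j) a)) as [[E [? ?]]|[[E [? ?]]|[E ?]]]; rewrite E.
  - symmetry; apply vD_T; tauto.
  - symmetry; apply vD_t; tauto.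
  - symmetry; apply vD_F; tauto.
Qed.

Lemma vD_Fnk n k phi D : sat n k phi D -> in_Fnk n k (vD D).
Proof.
  intros HS. split; [eapply vD_valuation; eauto|split].
  - intros a Ha. simpl. apply vD_T.
    + apply (vD_circ n k phi D _ HS). destruct Ha as [E|E]; rewrite E; discriminate.
    + intro H. apply (S_bc n k phi D (Circ (circn n a))); [exact HS| |apply (vD_circ n k phi D _ HS)|exact H].
      * pose proof (S_ax n k phi D (circn (n + 2) a) HS (Ax_cc n k a)) as Hc.
        replace (n + 2) with (S (S n)) in Hc by lia. exact Hc.
      * destruct Ha as [E|E]; rewrite E; discriminate.
  - intros j a H1 H2. apply (vD_ip n k phi D HS); lia.
Qed.

Theorem theorem27 (n k : nat) (Hk : 1 <= k) (a : formula) :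
  Rnk_valid n k a -> Lnk_provable n k a.
Proof.
  intro V. apply NNPP. intro Hn.
  assert (H0 : ~ Der n k (fun _ => False) a) by (intro D; apply Hn, Der_prov, D).
  pose proof (Delta_sat n k a H0) as S.
  pose proof (V _ (vD_Fnk n k a _ S)) as Hd. rewrite vD_des in Hd.
  destruct S as [_ [Hp _]]. contradiction.
Qed.
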